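(* Let $X,Y$ be reflexive Banach spaces, $\varphi:X\times Y\to\mathbb{R}\cup\{+\infty\}$ a proper convex lower semicontinuous function with $(0,0)\in{\rm dom}(\varphi)$ and $\lim_{\|x\|+\|y\|\to\infty}\frac{\varphi(x,y)}{\|x\|+\|y\|}=+\infty$, $A:X\to Y^*$ a bounded linear operator, and $B_1:X\to X^*$, $B_2:Y\to Y^*$ bounded linear skew-adjoint operators. Then the functional $$I(x,y)=\varphi(x,y)+\varphi^*(-A^*y+B_1x,\ Ax+B_2y)$$ has infimum $0$ on $X\times Y$, attained at some $(\bar x,\bar y)$, and $$(-A^*\bar y+B_1\bar x,\ A\bar x+B_2\bar y)\in\partial\varphi(\bar x,\bar y).$$
   Context: $\varphi^*$ is the Legendre conjugate of $\varphi$ on $X^*\times Y^*$; $\partial\varphi$ is the convex subdifferential. *)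

(* Defs.v *)
From HB Require Import structures.
From mathcomp Require Import all_boot all_order all_algebra.
From mathcomp Require Import all_classical all_reals all_analysis.
Set Implicit Arguments. Unset Strict Implicit. Unset Printing Implicit Defensive.
Import Order.TTheory GRing.Theory Num.Theory.
Import numFieldNormedType.Exports.
Local Open Scope classical_set_scope.
Local Open Scope ring_scope.

(* Elements of the topological dual X^* are represented as continuous linear
   functionals X -> R. *)
Definition is_dual (R : realType) (X : normedModType R) (f : X -> R) :=
  (forall (a : R) (u v : X), f (a *: u + v) = a * f u + f v) /\ continuous f.

(* Reflexivity: every bounded linear functional on X^* (with the dual norm
   ||f|| = sup_{||x||<=1} |f x|) is the evaluation at some x in X.
   "|Phi f| <= C * M for every M bounding f on the unit ball" is
   |Phi f| <= C * ||f||. *)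
Definition reflexive_space (R : realType) (X : normedModType R) :=
  forall Phi : (X -> R) -> R,
    (forall (a : R) (f g : X -> R), is_dual f -> is_dual g ->
        Phi (fun x => a * f x + g x) = a * Phi f + Phi g) ->
    (exists C : R, forall f : X -> R, is_dual f ->
        forall M : R, (forall x : X, `|x| <= 1 -> `|f x| <= M) ->
        `|Phi f| <= C * M) ->
    exists x : X, forall f : X -> R, is_dual f -> Phi f = f x.

(* A bounded linear operator A : X -> Y^* is represented by the bounded
   bilinear form a x y = <A x, y>. *)
Definition bounded_bilinear (R : realType) (X Y : normedModType R)
    (a : X -> Y -> R) :=
  (forall (c : R) (x1 x2 : X) (y : Y), a (c *: x1 + x2) y = c * a x1 y + a x2 y) /\
  (forall (c : R) (x : X) (y1 y2 : Y), a x (c *: y1 + y2) = c * a x y1 + a x y2) /\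
  (exists C : R, forall x y, `|a x y| <= C * `|x| * `|y|).

(* B : X -> X^* bounded linear skew-adjoint, via b x x' = <B x, x'>:
   B^* = -B, i.e. <B x, x'> = - <B x', x>. *)
Definition skew_adjoint (R : realType) (X : normedModType R) (b : X -> X -> R) :=
  bounded_bilinear b /\ forall x x' : X, b x x' = - b x' x.

Local Open Scope ereal_scope.

Definition convex_XY (R : realType) (X Y : normedModType R)
    (phi : X * Y -> \bar R) :=
  forall (t : R) (p q : X * Y), (0 <= t <= 1)%R ->
    phi ((t *: p.1 + (1 - t) *: q.1)%R, (t *: p.2 + (1 - t) *: q.2)%R)
      <= t%:E * phi p + (1 - t)%:E * phi q.

Definition conjugate (R : realType) (X Y : normedModType R)
    (phi : X * Y -> \bar R) (f : X -> R) (g : Y -> R) : \bar R :=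
  ereal_sup [set (f p.1 + g p.2)%:E - phi p | p in [set: X * Y]].

Definition in_subdiff (R : realType) (X Y : normedModType R)
    (phi : X * Y -> \bar R) (p : X * Y) (f : X -> R) (g : Y -> R) :=
  phi p \is a fin_num /\
  forall q : X * Y, phi p + (f (q.1 - p.1)%R + g (q.2 - p.2)%R)%:E <= phi q.

(* Main.v *)
Require Import Defs.
From HB Require Import structures.
From mathcomp Require Import all_boot all_order all_algebra.
From mathcomp Require Import all_classical all_reals all_analysis.
From mathcomp Require Import ring lra.
Import Order.TTheory GRing.Theory Num.Theory.
Import numFieldNormedType.Exports.
Local Open Scope classical_set_scope.
Local Open Scope ring_scope.
Set Implicit Arguments. Unset Strict Implicit. Unset Printing Implicit Defensive.

Definition linf (R : realType) (V : lmodType R) (f : V -> R) :=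
  forall a u v, f (a *: u + v) = a * f u + f v.

Lemma HB_analytic (R : realType) (V : lmodType R) (p : V -> R) (z : V) :
  (forall u v, p (u + v) <= p u + p v) ->
  (forall t v, 0 < t -> p (t *: v) = t * p v) ->
  (forall t, t <= p (t *: z)) ->
  exists f : V -> R, linf f /\ f z = 1 /\ forall v, f v <= p v.
Proof.
move=> psub phom pz.
have p0 : p 0 = 0.
  have := phom 2 0 (ltr0Sn _ 1); rewrite scaler0 => h.
  have : (2 - 1) * p 0 = 0 by rewrite mulrBl -h mul1r subrr.
  by rewrite (_ : 2 - 1 = 1 :> R) ?mul1r //; lra.
have z0 : z != 0.
  apply/eqP => z0; have := pz 1; rewrite z0 scaler0 p0; lra.
pose G0 : set (V * R) := [set vx | exists t, vx = (t *: z, t)].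
pose good (G : set (V * R)) := [/\ G (z, 1),
   (forall a u x v y, G (u, x) -> G (v, y) -> G (a *: u + v, a * x + y)),
   (forall u x y, G (u, x) -> G (u, y) -> x = y) &
   (forall u x, G (u, x) -> x <= p u)].
have goodG0 : good G0.
  split.
  - by exists 1; rewrite scale1r.
  - move=> a u x v y [t [-> ->]] [s [-> ->]]; exists (a * t + s).
    by rewrite scalerDl scalerA.
  - move=> u x y [t [-> ->]] [s [e ->]].
    apply/eqP; rewrite -subr_eq0; apply/eqP.
    have : (t - s) *: z = 0 by rewrite scalerBl e subrr.
    by move/eqP; rewrite scaler_eq0 (negbTE z0) orbF => /eqP.
  - by move=> u x [t [-> ->]].
pose P (G : set (V * R)) := good (G0 `|` G).
have [A [PA Amax]] : exists A, P A /\ forall B, A `<` B -> ~ P B.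
  apply: Zorn_bigcup => F FP Ftot.
  have cover : forall e1 e2, (G0 `|` \bigcup_(X in F) X) e1 ->
      (G0 `|` \bigcup_(X in F) X) e2 ->
      exists H, [/\ good H, H e1, H e2 & H `<=` G0 `|` \bigcup_(X in F) X].
    have sub1 : forall G, F G -> G0 `|` G `<=` G0 `|` \bigcup_(X in F) X.
      by move=> G FG e [?|?]; [left|right; exists G].
    move=> e1 e2 [h1|[G1 FG1 h1]] [h2|[G2 FG2 h2]].
    - by exists G0; split => // e he; left.
    - by exists (G0 `|` G2); split => //; [exact: FP|left|right|exact: sub1].
    - by exists (G0 `|` G1); split => //; [exact: FP|right|left|exact: sub1].
    - have [s12|s21] := Ftot _ _ FG1 FG2.
      + by exists (G0 `|` G2); split => //; [exact: FP|right; exact: s12|right|exact: sub1].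
      + by exists (G0 `|` G1); split => //; [exact: FP|right|right; exact: s21|exact: sub1].
  split.
  - by left; exists 1; rewrite scale1r.
  - move=> a u x v y h1 h2; have [H [[_ Hl _ _] H1 H2 HS]] := cover _ _ h1 h2.
    by apply: HS; apply: Hl.
  - move=> u x y h1 h2; have [H [[_ _ Hf _] H1 H2 HS]] := cover _ _ h1 h2.
    exact: Hf H1 H2.
  - move=> u x h1; have [H [[_ _ _ Hd] H1 H2 HS]] := cover _ _ h1 h1.
    exact: Hd H1.
pose M := G0 `|` A.
have [Mz Ml Mf Md] : good M := PA.
have M0 : M (0, 0).
  have := Ml (-1) z 1 z 1 Mz Mz; rewrite scaleN1r addNr.
  by rewrite (_ : -1 * 1 + 1 = 0 :> R) //; lra.
have tot : forall v, exists x, M (v, x).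
  move=> v; apply: contrapT => nv.
  have ndom : forall x, ~ M (v, x) by move=> x Mx; apply: nv; exists x.
  pose E := [set r | exists u x, M (u, x) /\ r = x - p (u - v)].
  have Ene : E !=set0 by exists (0 - p (0 - v)); exists 0, 0.
  have Eub : forall u' x', M (u', x') -> ubound E (p (u' + v) - x').
    move=> u' x' Mu' _ [u [x [Mu ->]]].
    have h1 := Md _ _ (Ml 1 u x u' x' Mu Mu').
    rewrite scale1r mul1r in h1.
    have h2 := psub (u - v) (u' + v).
    have e : u - v + (u' + v) = u + u'.
      by rewrite addrCA subrK addrC.
    rewrite e in h2; lra.
  pose c := sup E.
  have cle : forall u' x', M (u', x') -> c <= p (u' + v) - x'.
    by move=> u' x' Mu'; apply: ge_sup => //; apply: Eub.
  have hasE : has_sup E by split => //; exists (p (0 + v) - 0); exact: Eub.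
  have gec : forall u x, M (u, x) -> x - p (u - v) <= c.
    by move=> u x Mu; apply: sup_upper_bound => //; exists u, x.
  pose B := [set ux | exists u x t, M (u, x) /\ ux = (u + t *: v, x + t * c)].
  have MB : M `<=` B.
    by move=> [u x] Mu; exists u, x, 0; rewrite scale0r addr0 mul0r addr0.
  apply: (Amax B).
    split; first by move=> e Ae; apply: MB; right.
    move=> BA; apply: (ndom c); have : B (v, c).
      by exists 0, 0, 1; rewrite scale1r add0r mul1r add0r.
    by move/BA => Av; right.
  rewrite /P setUidr; last by move=> e G0e; apply: MB; left.
  split.
  - by apply: MB.
  - move=> a _ _ _ _ [u [x [t [Mu [-> ->]]]]] [u' [x' [t' [Mu' [-> ->]]]]].
    exists (a *: u + u'), (a * x + x'), (a * t + t'); split; first exact: Ml.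
    congr pair; last by rewrite mulrDl; ring.
    rewrite scalerDr scalerDl scalerA -!addrA; congr (_ + _).
    by rewrite addrC -!addrA; congr (_ + _); rewrite addrC.
  - move=> w y1 y2 [u [x [t [Mu e1]]]] [u' [x' [t' [Mu' e2]]]].
    case: e1 => e1 ->; case: e2 => e2 ->.
    have e : u + t *: v = u' + t' *: v by rewrite -e1 -e2.
    have [tt'|tt'] := eqVneq t t'.
      subst t'; have uu : u = u' by move: e => /addIr.
      by subst u'; rewrite (Mf _ _ _ Mu Mu').
    exfalso; apply: (ndom ((t - t')^-1 * (x' - x))).
    have hv : v = (t - t')^-1 *: (u' - u).
      apply: (@scalerI _ _ (t - t')); first by rewrite subr_eq0.
      rewrite scalerA mulfV ?subr_eq0 // scale1r scalerBl.
      by rewrite -[u'](addrK (t' *: v)) -e addrAC [u + _]addrC addrK.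
    rewrite hv.
    have := Ml ((t - t')^-1) (u' - u) (x' - x) 0 0 _ M0.
    rewrite !addr0; apply.
    by have := Ml (-1) u x u' x' Mu Mu'; rewrite scaleN1r mulN1r addrC [- x + _]addrC.
  - move=> _ _ [u [x [t [Mu [-> ->]]]]].
    have [t0|t0|->] := ltgtP t 0; last by rewrite scale0r addr0 mul0r addr0; exact: Md.
    + pose s := - t; have s0 : 0 < s by rewrite oppr_gt0.
      have Ms := Ml (s^-1) u x 0 0 Mu M0; rewrite !addr0 in Ms.
      have h := gec _ _ Ms.
      have e : u + t *: v = s *: (s^-1 *: u - v).
        by rewrite scalerBr scalerA mulfV ?gt_eqF // scale1r /s scaleNr opprK.
      rewrite e phom //.
      have : s * (s^-1 * x - p (s^-1 *: u - v)) <= s * c by rewrite ler_pM2l.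
      rewrite mulrBr mulrA mulfV ?gt_eqF // mul1r /s.
      by move=> h2; lra.
    + have Ms := Ml (t^-1) u x 0 0 Mu M0; rewrite !addr0 in Ms.
      have h := cle _ _ Ms.
      have e : u + t *: v = t *: (t^-1 *: u + v).
        by rewrite scalerDr scalerA mulfV ?gt_eqF // scale1r.
      rewrite e phom //.
      have : t * c <= t * (p (t^-1 *: u + v) - t^-1 * x) by rewrite ler_pM2l.
      rewrite mulrBr mulrA mulfV ?gt_eqF // mul1r.
      by move=> h2; lra.
have [f hf] := choice tot.
exists f; split; [|split].
- move=> a u v; apply: (Mf (a *: u + v)); first exact: hf.
  exact: Ml.
- exact: Mf (hf z) Mz.
- by move=> v; apply: Md.
Qed.
Definition convset (R : realType) (V : lmodType R) (U : set V) :=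
  forall u v (t : R), 0 <= t <= 1 -> U u -> U v -> U (t *: u + (1 - t) *: v).

Lemma linf0 (R : realType) (V : lmodType R) (f : V -> R) : linf f -> f 0 = 0.
Proof. by move=> lf; have := lf 1 0 0; rewrite scale1r addr0 mul1r => h; lra. Qed.
Lemma linfD (R : realType) (V : lmodType R) (f : V -> R) u v : linf f -> f (u + v) = f u + f v.
Proof. by move=> lf; rewrite -{1}[u]scale1r lf mul1r. Qed.
Lemma linfZ (R : realType) (V : lmodType R) (f : V -> R) a u : linf f -> f (a *: u) = a * f u.
Proof. by move=> lf; rewrite -[a *: u]addr0 lf linf0 // addr0. Qed.
Lemma linfN (R : realType) (V : lmodType R) (f : V -> R) u : linf f -> f (- u) = - f u.
Proof. by move=> lf; rewrite -scaleN1r linfZ // mulN1r. Qed.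
Lemma linfB (R : realType) (V : lmodType R) (f : V -> R) u v : linf f -> f (u - v) = f u - f v.
Proof. by move=> lf; rewrite linfD // linfN. Qed.

Lemma separation (R : realType) (V : lmodType R) (U : set V) (u0 x0 : V) :
  convset U -> U u0 ->
  (forall u v, U u -> exists d : R, 0 < d /\ U (u + d *: v)) -> ~ U x0 ->
  exists l : V -> R, [/\ linf l, l x0 - l u0 = 1,
     (forall u, U u -> l u < l x0) &
     (forall v t, 0 < t -> U (u0 + t^-1 *: v) -> l v <= t)].
Proof.
move=> cU Uu0 intU nUx0.
pose S v := [set t : R | 0 < t /\ U (u0 + t^-1 *: v)].
pose p v := inf (S v).
have Sne : forall v, S v !=set0.
  move=> v; have [d [d0 Ud]] := intU _ v Uu0.
  by exists d^-1; split; [rewrite invr_gt0|rewrite invrK].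
have Slb : forall v, has_lbound (S v) by move=> v; exists 0 => t [t0 _]; exact: ltW.
have pge : forall v t, S v t -> p v <= t by move=> v t St; exact: ge_inf.
have p0le : forall v, 0 <= p v by move=> v; apply: lb_le_inf => // t [t0 _]; exact: ltW.
have Sup : forall v t s, S v t -> t <= s -> S v s.
  move=> v t s [t0 Ut] ts; have s0 : 0 < s by exact: lt_le_trans ts.
  split => //.
  have hts : 0 <= t / s <= 1.
    by rewrite ler_pdivrMr // mul1r ts andbT divr_ge0 // ltW.
  have h := cU _ _ (t / s) hts Ut Uu0.
  have e : (t / s) *: (u0 + t^-1 *: v) + (1 - t / s) *: u0 = u0 + s^-1 *: v.
    rewrite scalerDr scalerA addrAC -scalerDl subrKC scale1r.
    by rewrite mulrAC mulfV ?gt_eqF // mul1r.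
  by rewrite -e.
have phle : forall c v, 0 < c -> p (c *: v) <= c * p v.
  move=> c v c0; rewrite -ler_pdivrMl //; apply: lb_le_inf => // t [t0 Ut].
  rewrite ler_pdivrMl //; apply: pge; split; first exact: mulr_gt0.
  by rewrite scalerA invfM mulrAC mulVf ?gt_eqF // mul1r.
have phom : forall c v, 0 < c -> p (c *: v) = c * p v.
  move=> c v c0; apply/eqP; rewrite eq_le phle //=.
  have := phle c^-1 (c *: v); rewrite invr_gt0 scalerA mulVf ?gt_eqF // scale1r.
  by move=> /(_ c0); rewrite -ler_pdivlMl // invrK.
have psub : forall u v, p (u + v) <= p u + p v.
  move=> u v.
  have key : forall s t, S u s -> S v t -> p (u + v) <= s + t.
    move=> s t [s0 Us] [t0 Ut]; apply: pge; split; first exact: addr_gt0.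
    have st0 : 0 < s + t by exact: addr_gt0.
    have hst : 0 <= s / (s + t) <= 1.
      by rewrite ler_pdivrMr // mul1r lerDl divr_ge0 ?ltW.
    have h := cU _ _ (s / (s + t)) hst Us Ut.
    have e1 : 1 - s / (s + t) = t / (s + t).
      by apply: (@mulIf _ (s + t)); rewrite ?gt_eqF // mulrBl !mulfVK ?gt_eqF // mul1r addrAC subrr add0r.
    have e : (s / (s + t)) *: (u0 + s^-1 *: u) + (1 - s / (s + t)) *: (u0 + t^-1 *: v)
           = u0 + (s + t)^-1 *: (u + v).
      rewrite e1 !scalerDr !scalerA addrACA -scalerDl -mulrDl divff ?gt_eqF // scale1r.
      rewrite mulrAC mulfV ?gt_eqF // mul1r mulrAC mulfV ?gt_eqF // mul1r.
      by [].
    by rewrite -e.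
  have h1 : forall t, S v t -> p (u + v) - t <= p u.
    move=> t St; apply: lb_le_inf => // s Ss; have := key _ _ Ss St; lra.
  have : p (u + v) - p u <= p v.
    apply: lb_le_inf => // t St; have := h1 _ St; lra.
  lra.
pose z := x0 - u0.
have pz1 : 1 <= p z.
  rewrite leNgt; apply/negP => /(inf_lt (Sne z)) [s Ss s1].
  have [_ U1] := Sup _ _ 1 Ss (ltW s1).
  by apply: nUx0; move: U1; rewrite invr1 scale1r /z addrC subrK.
have pzt : forall t, t <= p (t *: z).
  move=> t; have [t0|t0] := leP t 0; first exact: le_trans t0 (p0le _).
  by rewrite phom // -{1}[t]mulr1 ler_pM2l.
have [l [ll [lz lp]]] := HB_analytic psub phom pzt.
have lx0 : l x0 - l u0 = 1 by rewrite -linfB.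
exists l; split => //.
- move=> u Uu; have [d [d0 Ud]] := intU _ (u - u0) Uu.
  have Sd : S (u - u0) (1 + d)^-1.
    split; first by rewrite invr_gt0 addr_gt0.
    by rewrite invrK scalerDl scale1r addrA [u0 + _]addrC subrK.
  have : p (u - u0) < 1.
    apply: le_lt_trans (pge _ _ Sd) _; rewrite invf_lt1 ?addr_gt0 //.
    by rewrite ltrDl.
  have := lp (u - u0); rewrite linfB //; lra.
- by move=> v t t0 Ut; apply: le_trans (lp v) (pge _ _ _); split.
Qed.
Lemma linf_sum (R : realType) (V : lmodType R) (l : V -> R) n (F : 'I_n -> V) :
  linf l -> l (\sum_(i < n) F i) = \sum_(i < n) l (F i).
Proof.
move=> ll; elim/big_rec2: _ => [|i y1 y2 _ <-]; first exact: linf0.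
exact: linfD.
Qed.

Definition convfun (R : realType) (V : lmodType R) (Dom : set V) (f : V -> R) :=
  forall u v (t : R), 0 <= t <= 1 -> Dom u -> Dom v ->
    f (t *: u + (1 - t) *: v) <= t * f u + (1 - t) * f v.

Lemma jensen (R : realType) (Z : lmodType R) (Dom : set Z) (f : Z -> R) :
  convset Dom -> convfun Dom f ->
  forall n (lam : 'I_n -> R) (q : 'I_n -> Z), (forall i, 0 <= lam i) ->
  \sum_(i < n) lam i = 1 -> (forall i, Dom (q i)) ->
  Dom (\sum_(i < n) lam i *: q i) /\
  f (\sum_(i < n) lam i *: q i) <= \sum_(i < n) lam i * f (q i).
Proof.
move=> cD cf; elim=> [|n IH] lam q l0 l1 Dq.
  by move: l1; rewrite big_ord0 => /eqP; rewrite eq_sym oner_eq0.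
move: l1; rewrite !big_ord_recr /= => l1.
set a := lam ord_max in l1 *.
have rge0 : 0 <= \sum_(i < n) lam (widen_ord (leqnSn n) i) by apply: sumr_ge0.
have [a1|a1] := eqVneq a 1.
  have h0 : forall i, true -> lam (widen_ord (leqnSn n) i) = 0.
    apply: psumr_eq0P => //; rewrite a1 in l1; lra.
  rewrite big1 ?add0r; last by move=> i _; rewrite h0 // scale0r.
  rewrite big1 ?add0r; last by move=> i _; rewrite h0 // mul0r.
  by rewrite a1 scale1r mul1r; split.
pose s := 1 - a.
have s0 : 0 < s.
  have : a <= 1 by lra.
  by rewrite le_eqVlt (negbTE a1) /= /s => h; lra.
pose lam2 := fun i : 'I_n => lam (widen_ord (leqnSn n) i) / s.
pose q2 := fun i : 'I_n => q (widen_ord (leqnSn n) i).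
have hl0 : forall i, 0 <= lam2 i by move=> i; rewrite /lam2 divr_ge0 // ltW.
have hl1 : \sum_(i < n) lam2 i = 1.
  rewrite /lam2 -mulr_suml; have -> : \sum_(i < n) lam (widen_ord (leqnSn n) i) = s.
    by rewrite /s; lra.
  by rewrite divff // gt_eqF.
have hq : forall i, Dom (q2 i) by move=> i; apply: Dq.
have [D2 f2] := IH lam2 q2 hl0 hl1 hq.
have ev : \sum_(i < n) lam (widen_ord (leqnSn n) i) *: q (widen_ord (leqnSn n) i)
          = s *: \sum_(i < n) lam2 i *: q2 i.
  rewrite scaler_sumr; apply: eq_bigr => i _.
  by rewrite scalerA /lam2 mulrC divfK // gt_eqF.
have ef : \sum_(i < n) lam (widen_ord (leqnSn n) i) * f (q (widen_ord (leqnSn n) i))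
          = s * \sum_(i < n) lam2 i * f (q2 i).
  rewrite mulr_sumr; apply: eq_bigr => i _.
  by rewrite mulrA /lam2 [s * _]mulrC divfK // gt_eqF.
have ha : a = 1 - s by rewrite /s; lra.
have st : 0 <= s <= 1 by rewrite ltW //= /s; have := l0 ord_max; rewrite -/a; lra.
rewrite ev ef ha; split; first exact: cD.
apply: le_trans (cf _ _ _ st D2 (Dq _)) _.
by rewrite lerD2r ler_pM2l.
Qed.
Lemma fin_alt (R : realType) (Z : lmodType R) (Dom : set Z) (f : Z -> R)
  (L : Z -> Z -> R) n (q : 'I_n -> Z) (p0 : Z) (eps : R) :
  convset Dom -> convfun Dom f ->
  (forall b, linf (fun a => L a b)) -> (forall a, linf (L a)) ->
  (forall a, L a a = 0) ->
  Dom p0 -> (forall i, Dom (q i)) -> 0 < eps ->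
  exists p, Dom p /\ forall i, f p + L p (q i) - f (q i) < eps.
Proof.
move=> cD cf L1 L2 L0 Dp0 Dq e0.
pose h i p := f p + L p (q i) - f (q i).
pose U := [set v : 'rV[R]_n | exists p, exists2 d, 0 < d & Dom p /\ forall i, h i p + d <= v 0 i].
pose x0 : 'rV[R]_n := \row_(i < n) eps.
have [Ux0|nUx0] := pselect (U x0).
  case: Ux0 => p [d d0 [Dp hp]]; exists p; split => // i.
  by have := hp i; rewrite mxE /h; lra.
exfalso.
have cU : convset U.
  move=> u v t t01 [p [d d0 [Dp hp]]] [p' [d' d0' [Dp' hp']]].
  exists (t *: p + (1 - t) *: p'); exists (t * d + (1 - t) * d').
    by case/andP: t01 => t0 t1; nra.
  split; first exact: cD.
  move=> i; rewrite !mxE.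
  have := cf _ _ _ t01 Dp Dp'.
  have := hp i; have := hp' i.
  rewrite /h (linfD _ _ (L1 _)) !(linfZ _ _ (L1 _)).
  by case/andP: t01 => t0 t1; nra.
have iU : forall u w, U u -> exists d : R, 0 < d /\ U (u + d *: w).
  move=> u w [p [d d0 [Dp hp]]].
  pose K := 1 + \sum_(j < n) `|w 0 j|.
  have K1 : 1 <= K by rewrite lerDl sumr_ge0.
  have K0 : 0 < K by exact: lt_le_trans ltr01 K1.
  have c0 : 0 < d / 2 / K by rewrite !divr_gt0.
  exists (d / 2 / K); split => //.
  exists p; exists (d / 2); first by rewrite divr_gt0.
  split => // i; rewrite !mxE.
  have wi : `|w 0 i| <= K.
    rewrite /K (bigD1 i) //=.
    have : 0 <= \sum_(j < n | j != i) `|w 0 j| by rewrite sumr_ge0.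
    lra.
  have cK : d / 2 / K * K = d / 2 by rewrite divfK // gt_eqF.
  have nw := ler_norm (- w 0 i); rewrite normrN in nw.
  have := hp i; nra.
have Uu : U (\row_(i < n) (h i p0 + 1)).
  by exists p0; exists 1 => //; split => // i; rewrite mxE.
have [l [ll lx lU _]] := separation cU Uu iU nUx0.
pose c i := l (delta_mx 0 i).
have lsum : forall v : 'rV_n, l v = \sum_(i < n) v 0 i * c i.
  move=> v; rewrite {1}(row_sum_delta v) (linf_sum _ ll); apply: eq_bigr => i _.
  exact: linfZ.
have cle : forall i, c i <= 0.
  move=> i; rewrite leNgt; apply/negP => ci.
  set u := \row_(j < n) (h j p0 + 1).
  have lu := lU _ Uu.
  pose t := (l x0 - l u) / c i.
  have t0 : 0 < t by rewrite divr_gt0 // subr_gt0.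
  have Ut : U (u + t *: delta_mx 0 i).
    exists p0; exists 1 => //; split => // j; rewrite !mxE lerDl.
    by apply: mulr_ge0; [exact: ltW|exact: ler0n].
  have := lU _ Ut; rewrite (linfD _ _ ll) (linfZ _ _ ll) -/(c i) /t divfK ?gt_eqF //.
  lra.
pose mu i := - c i.
have mu0 : forall i, 0 <= mu i by move=> i; rewrite /mu oppr_ge0.
pose S := \sum_(i < n) mu i.
have lval : forall v : 'rV_n, l v = - \sum_(i < n) mu i * v 0 i.
  move=> v; rewrite lsum -sumrN; apply: eq_bigr => i _; rewrite /mu; ring.
have S0 : 0 < S.
  rewrite lt_def sumr_ge0 // andbT; apply/negP => /eqP S0.
  have h0 := psumr_eq0P (fun i _ => mu0 i) S0.
  have := lU _ Uu; rewrite !lval !big1 //; first by rewrite oppr0 ltxx.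
    by move=> i _; rewrite h0 // mul0r.
  by move=> i _; rewrite h0 // mul0r.
have pos : forall p, Dom p -> 0 < \sum_(i < n) mu i * h i p.
  move=> p Dp.
  have Uv : U (\row_(j < n) (h j p + eps / 2)).
    by exists p; exists (eps / 2); [rewrite divr_gt0|split => // j; rewrite mxE].
  have := lU _ Uv; rewrite !lval.
  have e1 : \sum_(i < n) mu i * (\row_(j < n) (h j p + eps / 2)) 0 i
          = \sum_(i < n) mu i * h i p + eps / 2 * S.
    rewrite /S mulr_sumr -big_split /=; apply: eq_bigr => i _; rewrite mxE; ring.
  have e2 : \sum_(i < n) mu i * x0 0 i = eps * S.
    rewrite /S mulr_sumr; apply: eq_bigr => i _; rewrite mxE; ring.
  rewrite e1 e2 => h1.
  have : 0 < eps / 2 * S by rewrite mulr_gt0 // divr_gt0.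
  nra.
pose lam i := mu i / S.
have lam0 : forall i, 0 <= lam i by move=> i; rewrite divr_ge0 // ltW.
have lam1 : \sum_(i < n) lam i = 1 by rewrite -mulr_suml divff // gt_eqF.
have [Dps fps] := jensen cD cf lam0 lam1 Dq.
set ps := \sum_(i < n) lam i *: q i in Dps fps.
have := pos _ Dps.
have eL : \sum_(i < n) mu i * L ps (q i) = 0.
  have -> : \sum_(i < n) mu i * L ps (q i) = L ps (S *: ps).
    rewrite /ps scaler_sumr (linf_sum _ (L2 ps)); apply: eq_bigr => i _.
    by rewrite scalerA /lam [S * _]mulrC divfK ?gt_eqF // (linfZ _ _ (L2 ps)).
  by rewrite (linfZ _ _ (L2 ps)) L0 mulr0.
have eh : \sum_(i < n) mu i * h i ps
    = S * f ps + \sum_(i < n) mu i * L ps (q i) - \sum_(i < n) mu i * f (q i).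
  rewrite /S mulr_suml -big_split -sumrB /=; apply: eq_bigr => i _; rewrite /h; ring.
have ef : \sum_(i < n) mu i * f (q i) = S * \sum_(i < n) lam i * f (q i).
  rewrite mulr_sumr; apply: eq_bigr => i _; rewrite /lam mulrA [S * _]mulrC divfK //.
  by rewrite gt_eqF.
rewrite eh eL ef.
have : S * f ps <= S * \sum_(i < n) lam i * f (q i) by rewrite ler_pM2l.
lra.
Qed.
Lemma sep_closed (R : realType) (Z : normedModType R) (C : set Z) (pb c0 : Z) (r : R) :
  0 < r -> convset C -> C c0 -> (forall c, C c -> r <= `|c - pb|) ->
  exists l : Z -> R, [/\ linf l, (exists K : R, forall v, `|l v| <= K * `|v|) &
     exists2 d : R, 0 < d & forall c, C c -> l c <= l pb - d].
Proof.
move=> r0 cC Cc0 far.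
have r20 : 0 < r / 2 by rewrite divr_gt0.
pose U := [set u : Z | exists c, C c /\ `|u - c| < r / 2].
have cU : convset U.
  move=> u v t t01 [c [Cc uc]] [c' [Cc' vc']]; exists (t *: c + (1 - t) *: c').
  split; first exact: cC.
  have -> : t *: u + (1 - t) *: v - (t *: c + (1 - t) *: c')
          = t *: (u - c) + (1 - t) *: (v - c').
    by rewrite !scalerBr opprD !addrA; congr (_ + _); rewrite addrAC.
  apply: le_lt_trans (ler_normD _ _) _.
  rewrite !normrZ; case/andP: t01 => t0 t1.
  rewrite (ger0_norm t0) ger0_norm ?subr_ge0 //.
  have s1 : 0 < r / 2 - `|u - c| by rewrite subr_gt0.
  have s2 : 0 < r / 2 - `|v - c'| by rewrite subr_gt0.
  have a2 : 0 <= (1 - t) * (r / 2 - `|v - c'|) by rewrite mulr_ge0 ?subr_ge0 // ltW.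
  have [tz|tp] := eqVneq t 0.
    by rewrite tz mul0r add0r subr0 mul1r.
  have a1 : 0 < t * (r / 2 - `|u - c|) by rewrite mulr_gt0 // lt_def tp t0.
  have : t * (r / 2 - `|u - c|) + (1 - t) * (r / 2 - `|v - c'|) = r / 2 - (t * `|u - c| + (1 - t) * `|v - c'|) by ring.
  lra.
have iU : forall u w, U u -> exists d : R, 0 < d /\ U (u + d *: w).
  move=> u w [c [Cc uc]].
  pose d := (r / 2 - `|u - c|) / (`|w| + 1).
  have w1 : 0 < `|w| + 1 by rewrite ltr_pwDr.
  have d0 : 0 < d by rewrite divr_gt0 // subr_gt0.
  exists d; split => //; exists c; split => //.
  rewrite addrAC; apply: le_lt_trans (ler_normD _ _) _.
  rewrite normrZ (gtr0_norm d0).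
  have : d * `|w| < r / 2 - `|u - c|.
    rewrite /d mulrAC ltr_pdivrMr // ltr_pM2l ?subr_gt0 //.
    by rewrite ltrDl.
  lra.
have Uc0 : U c0 by exists c0; split; rewrite // subrr normr0.
have nUpb : ~ U pb.
  move=> [c [Cc h]]; have := far _ Cc; rewrite distrC; lra.
have [l [ll lx lU lb]] := separation cU Uc0 iU nUpb.
have lb' : forall v, l v <= 4 / r * `|v|.
  move=> v; have [->|v0] := eqVneq v 0; first by rewrite linf0 // normr0 mulr0.
  have nv : 0 < `|v| by rewrite normr_gt0.
  apply: lb; first by rewrite mulr_gt0 // divr_gt0.
  exists c0; split => //; rewrite addrAC subrr add0r normrZ.
  rewrite invfM ger0_norm; last by rewrite mulr_ge0 // invr_ge0 ltW // divr_gt0.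
  rewrite divfK ?gt_eqF // invf_div; lra.
exists l; split => //.
  exists (4 / r) => v; rewrite ler_norml lb' andbT.
  by have := lb' (- v); rewrite (linfN _ ll) normrN; lra.
pose w := pb - c0.
have lw : 0 < l w by rewrite /w (linfB _ _ ll) subr_gt0; apply: lU.
pose s := r / 4 / (`|w| + 1).
have w1 : 0 < `|w| + 1 by rewrite ltr_pwDr.
have s0 : 0 < s by rewrite divr_gt0 // divr_gt0.
exists (s * l w); first exact: mulr_gt0.
move=> c Cc; have : U (c + s *: w).
  exists c; split => //; rewrite addrAC subrr add0r normrZ (gtr0_norm s0).
  have : s * `|w| <= r / 4.
    rewrite /s mulrAC ler_pdivrMr // ler_pM2l ?divr_gt0 //; lra.
  lra.
move/lU; rewrite (linfD _ _ ll) (linfZ _ _ ll); lra.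
Qed.
Lemma lip_continuous (R : realType) (V : normedModType R) (f : V -> R) (K : R) :
  linf f -> (forall v, `|f v| <= K * `|v|) -> continuous f.
Proof.
move=> lf hK x; apply/cvgrPdist_lt => e e0.
have K1 : 0 < `|K| + 1 by rewrite ltr_pwDr.
apply/nbhs_normP; exists (e / (`|K| + 1)) => /=; first by rewrite divr_gt0.
move=> y /= hy; rewrite -(linfB _ _ lf).
apply: le_lt_trans (hK _) _.
have n0 := normr_ge0 (x - y).
have : K * `|x - y| <= `|K| * `|x - y| by rewrite ler_wpM2r // ler_norm.
move: hy; rewrite ltr_pdivlMr // => hy; nra.
Qed.

Lemma dual_bounded (R : realType) (V : normedModType R) (f : V -> R) :
  is_dual f -> exists K : R, 0 <= K /\ forall v, `|f v| <= K * `|v|.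
Proof.
case=> lf cf.
have := cf 0; move/cvgrPdist_lt/(_ 1 ltr01)/nbhs_normP => [d /= d0 hd].
have f0 : f 0 = 0 by apply: (linf0 lf).
exists (2 / d); split; first by rewrite divr_ge0 // ltW.
move=> v; have [->|v0] := eqVneq v 0; first by rewrite f0 normr0 normr0 mulr0.
have nv : 0 < `|v| by rewrite normr_gt0.
have c0 : 0 < d / 2 / `|v| by rewrite !divr_gt0.
have := hd ((d / 2 / `|v|) *: v).
rewrite /= sub0r normrN normrZ (gtr0_norm c0) divfK ?gt_eqF //.
have -> : d / 2 < d by lra.
move=> /(_ isT); rewrite f0 sub0r normrN (linfZ _ _ lf) normrM (gtr0_norm c0).
rewrite mulrAC ltr_pdivrMr // mul1r => h.
have dk : d * d^-1 = 1 by rewrite mulfV ?gt_eqF.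
have k0 : 0 < d^-1 by rewrite invr_gt0.
rewrite mulrC mulrA; nra.
Qed.

Lemma ultra_lim (R : realType) (T : Type) (G : set_system T) (h : T -> R) (K : R) :
  UltraFilter G -> G [set t | `|h t| <= K] ->
  forall e, 0 < e -> G [set t | `|h t - sup [set s | G [set t | s <= h t]]| < e].
Proof.
move=> UG GK e e0; set S := [set s | G [set t | s <= h t]].
have SK : forall s, S s -> s <= K.
  move=> s Ss; have [t [st ht]] := filter_ex (filterI Ss GK).
  by apply: le_trans st (le_trans (ler_norm _) ht).
have SnK : S (- K).
  by apply: filterS GK => t /=; rewrite ler_norml => /andP[].
have hasS : has_sup S by split; [exists (- K)|exists K => s /SK].
set l := sup S.
have e20 : 0 < e / 2 by rewrite divr_gt0.
have [s Ss ls] := sup_adherent e20 hasS.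
have nS : ~ S (l + e / 2).
  move=> Sl; have := sup_upper_bound hasS Sl; rewrite -/l; lra.
have [GS|GnS] := in_ultra_setVsetC [set t | l + e / 2 <= h t] UG; first by [].
apply: filterS (filterI Ss GnS) => t [st /negP]; rewrite -ltNge => ht.
move: st ls => /= st; rewrite -/l => ls.
rewrite /= ltr_norml; apply/andP; split; lra.
Qed.

Lemma ultra_unique (R : realType) (T : Type) (G : set_system T) (h : T -> R) (l1 l2 : R) :
  ProperFilter G -> (forall e, 0 < e -> G [set t | `|h t - l1| < e]) ->
  (forall e, 0 < e -> G [set t | `|h t - l2| < e]) -> l1 = l2.
Proof.
move=> PG h1 h2; apply/eqP; apply: contraT => ne.
have e0 : 0 < `|l1 - l2| / 2 by rewrite divr_gt0 // normr_gt0 subr_eq0.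
have [t [t1 t2]] := filter_ex (filterI (h1 _ e0) (h2 _ e0)).
move: t1 t2 => /= t1 t2.
have := ler_normB (h t - l2) (h t - l1).
have -> : h t - l2 - (h t - l1) = l1 - l2 by ring.
lra.
Qed.

Lemma unit_bound (R : realType) (V : normedModType R) (f : V -> R) (M : R) :
  linf f -> (forall x, `|x| <= 1 -> `|f x| <= M) -> forall x, `|f x| <= M * `|x|.
Proof.
move=> lf hM x; have [->|x0] := eqVneq x 0.
  by rewrite (linf0 lf) !normr0 mulr0.
have nx : 0 < `|x| by rewrite normr_gt0.
have := hM (`|x|^-1 *: x); rewrite normfZV // lexx (linfZ _ _ lf) normrM.
rewrite normfV normr_id => /(_ isT) h.
have := ler_wpM2r (ltW nx) h.
by rewrite mulrAC mulVf ?gt_eqF // mul1r.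
Qed.

Lemma weak_lim (R : realType) (X : normedModType R) (T : Type) (G : set_system T)
  (pi : T -> X) (M : R) :
  UltraFilter G -> reflexive_space X -> G [set t | `|pi t| <= M] ->
  exists xb : X, forall f, is_dual f -> forall e, 0 < e ->
    G [set t | `|f (pi t) - f xb| < e].
Proof.
move=> UG rX GM.
pose Phi (F : X -> R) := sup [set s | G [set t | s <= F (pi t)]].
have conv : forall f, is_dual f -> forall e, 0 < e -> G [set t | `|f (pi t) - Phi f| < e].
  move=> f df; have [K [K0 hK]] := dual_bounded df.
  apply: (@ultra_lim _ _ G (fun t => f (pi t)) (K * M)) => //.
  apply: filterS GM => t /= ht; apply: le_trans (hK _) _; exact: ler_wpM2l.
have [xb hxb] : exists xb : X, forall f, is_dual f -> Phi f = f xb.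
  apply: rX.
  - move=> a f g df dg.
    have dh : is_dual (fun x => a * f x + g x).
      have [Kf [Kf0 hKf]] := dual_bounded df; have [Kg [Kg0 hKg]] := dual_bounded dg.
      have lh : linf (fun x => a * f x + g x).
        move=> c u v; rewrite (proj1 df) (proj1 dg); ring.
      split => //; apply: (lip_continuous (K := `|a| * Kf + Kg)) => // v.
      apply: le_trans (ler_normD _ _) _; rewrite normrM.
      have := hKf v; have := hKg v; have := normr_ge0 a; have := normr_ge0 (f v).
      nra.
    apply: (@ultra_unique _ _ G (fun t => a * f (pi t) + g (pi t))) => //.
      exact: conv dh.
    move=> e e0.
    have e1 : 0 < e / 2 / (`|a| + 1) by rewrite !divr_gt0 // ltr_pwDr.
    have e2 : 0 < e / 2 by rewrite divr_gt0.
    apply: filterS (filterI (conv _ df _ e1) (conv _ dg _ e2)) => t [/= ht1 ht2] /=.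
    have -> : a * f (pi t) + g (pi t) - (a * Phi f + Phi g)
            = a * (f (pi t) - Phi f) + (g (pi t) - Phi g) by ring.
    apply: le_lt_trans (ler_normD _ _) _; rewrite normrM.
    have a1 : 0 < `|a| + 1 by rewrite ltr_pwDr.
    have : `|a| * `|f (pi t) - Phi f| <= (`|a| + 1) * (e / 2 / (`|a| + 1)).
      rewrite ler_pM // ?ltW //; lra.
    rewrite [(_ + 1) * _]mulrC divfK ?gt_eqF //; lra.
  - exists M => f df M' hM'.
    have hx := unit_bound (proj1 df) hM'.
    have M'0 : 0 <= M' by have := hM' 0; rewrite normr0 ler01 => /(_ isT); apply: le_trans.
    have GB : G [set t | `|f (pi t)| <= M * M'].
      apply: filterS GM => t /= ht; apply: le_trans (hx _) _; rewrite mulrC.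
      exact: ler_wpM2r.
    apply/ler_addgt0Pr => e e0.
    have [t [t1 t2]] := filter_ex (filterI (conv _ df _ e0) GB).
    move: t1 t2 => /= t1 t2.
    have := ler_normB (f (pi t)) (f (pi t) - Phi f).
    have -> : f (pi t) - (f (pi t) - Phi f) = Phi f by ring.
    lra.
exists xb => f df e e0; rewrite -hxb //; exact: conv.
Qed.
Lemma fin_le (R : realType) (x : \bar R) (y : R) :
  x != -oo%E -> (x <= y%:E)%E -> x \is a fin_num /\ fine x <= y.
Proof. by case: x => [r| |] //= _; rewrite lee_fin. Qed.

Lemma core (R : realType) (X Y : normedModType R) (phi : X * Y -> \bar R)
  (L : X * Y -> X * Y -> R) :
  reflexive_space X -> reflexive_space Y ->
  (forall p, phi p != -oo%E) -> convex_XY phi -> lower_semicontinuous phi ->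
  phi 0 \is a fin_num ->
  (forall M : R, exists r : R, forall x y,
      r < `|x| + `|y| -> ((M * (`|x| + `|y|))%:E <= phi (x, y))%E) ->
  (forall b, linf (fun a => L a b)) -> (forall a, linf (L a)) ->
  (forall a, L a a = 0) ->
  (forall q, exists K : R, forall p, `|L p q| <= K * `|p|) ->
  exists pb, phi pb \is a fin_num /\ forall q, (phi pb + (L pb q)%:E <= phi q)%E.
Proof.
move=> rX rY nNy cvx lsc phi0 coer L1 L2 L0 LK.
pose Dom := [set p : X * Y | phi p \is a fin_num].
pose fr p := fine (phi p).
have cvx' : forall (t : R) (u v : X * Y), 0 <= t <= 1 ->
    (phi ((t *: u + (1 - t) *: v)%R) <= t%:E * phi u + (1 - t)%:E * phi v)%E.
  by move=> t u v t01; exact: (cvx t u v t01).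
have cDf : forall (t : R) (u v : X * Y), 0 <= t <= 1 -> Dom u -> Dom v ->
    Dom (t *: u + (1 - t) *: v) /\ fr (t *: u + (1 - t) *: v) <= t * fr u + (1 - t) * fr v.
  move=> t u v t01 Du Dv; have := cvx' t u v t01.
  rewrite -(fineK Du) -(fineK Dv) -!EFinM -EFinD => h.
  exact: fin_le (nNy _) h.
have cD : convset Dom by move=> u v t t01 Du Dv; have [] := cDf t u v t01 Du Dv.
have cf : convfun Dom fr by move=> u v t t01 Du Dv; have [] := cDf t u v t01 Du Dv.
have D0 : Dom 0 by [].
have [r0 hr0] := coer (`|fr 0| + 2).
pose M0 := Num.max r0 1.
have bnd : forall p, Dom p -> fr p < fr 0 + 1 -> `|p.1| <= M0 /\ `|p.2| <= M0.
  case=> x y Dp hp /=.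
  suff : `|x| + `|y| <= M0 by have := normr_ge0 x; have := normr_ge0 y; lra.
  rewrite leNgt; apply/negP => hM.
  have h1 : r0 < `|x| + `|y| by apply: le_lt_trans hM; by rewrite le_max lexx.
  have h2 : 1 < `|x| + `|y| by apply: le_lt_trans hM; by rewrite le_max lexx orbT.
  have := hr0 _ _ h1; rewrite -(fineK Dp) lee_fin -/(fr (x, y)) => h3.
  have := ler_norm (fr 0); have := normr_ge0 (fr 0); nra.
pose B (i : seq (X * Y) * R) := [set p : X * Y | [/\ Dom p, `|p.1| <= M0, `|p.2| <= M0 &
   forall q, q \in i.1 -> Dom q -> fr p + L p q - fr q < i.2]].
pose D := [set i : seq (X * Y) * R | 0 < i.2].
have Bne : forall i, D i -> B i !=set0.
  case=> Q e /= e0.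
  pose Q' := [seq q <- 0 :: Q | `[< Dom q >]].
  have DQ : forall j : 'I_(size Q'), Dom (nth 0 Q' j).
    move=> j; have : nth 0 Q' j \in Q' by apply: mem_nth.
    by rewrite mem_filter => /andP[/asboolP].
  have em : 0 < Num.min e 1 by rewrite lt_min e0 ltr01.
  have [p [Dp hp]] := fin_alt cD cf L1 L2 L0 D0 DQ em.
  have inQ : forall q, q \in 0 :: Q -> Dom q -> fr p + L p q - fr q < Num.min e 1.
    move=> q qQ Dq; have qQ' : q \in Q' by rewrite mem_filter qQ andbT; apply/asboolP.
    have ix : (index q Q' < size Q')%N by rewrite index_mem.
    have := hp (Ordinal ix).
    by rewrite /= nth_index.
  have h0 := inQ 0 (mem_head _ _) D0.
  rewrite (linf0 (L2 p)) lt_min in h0; case/andP: h0 => _ h0.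
  have [b1 b2] := bnd p Dp ltac:(lra).
  exists p; split => // q qQ Dq.
  have := inQ q ltac:(by rewrite in_cons qQ orbT) Dq; rewrite lt_min => /andP[].
  by [].
have FF : Filter (filter_from D B).
  apply: filter_from_filter; first by exists ([::], 1) => /=; exact: ltr01.
  move=> [Q1 e1] [Q2 e2] /= e10 e20; exists (Q1 ++ Q2, Num.min e1 e2).
    by rewrite /D /= lt_min e10 e20.
  move=> p [Dp b1 b2 hp]; split; split => // q qQ Dq;
    have := hp q ltac:(by rewrite mem_cat qQ ?orbT) Dq; rewrite lt_min => /andP[].
    by [].
  by [].
have PF : ProperFilter (filter_from D B) by apply: filter_from_proper.
have [G [UG FG]] := ultraFilterLemma PF.
have GB : forall i, D i -> G (B i) by move=> i Di; apply: FG; exists i.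
have GM : G [set p : X * Y | `|p.1| <= M0 /\ `|p.2| <= M0].
  by apply: filterS (GB ([::], 1) ltr01) => p [].
have [xb hxb] := weak_lim (pi := fst) UG rX (filterS (fun p (h : _ /\ _) => proj1 h) GM).
have [yb hyb] := weak_lim (pi := snd) UG rY (filterS (fun p (h : _ /\ _) => proj2 h) GM).
pose pb := (xb, yb).
have key : forall q, Dom q -> forall e, 0 < e ->
    (phi pb + (L pb q)%:E <= (fr q + e)%:E)%E.
  move=> q Dq e e0; rewrite leNgt; apply/negP => hlt.
  pose C := [set p : X * Y | (phi p + (L p q)%:E <= (fr q + e)%:E)%E].
  have Cfin : forall p, C p -> Dom p /\ fr p + L p q <= fr q + e.
    move=> p Cp; have nn := nNy p; move: Cp; rewrite /C /Dom /fr /=.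
    by case E: (phi p) nn => [v| |] //=; rewrite eqxx.
  have GC : G C.
    apply: filterS (GB ([:: q], e) e0) => p [Dp _ _ hp].
    have := hp q (mem_head _ _) Dq.
    by rewrite /C /= -(fineK Dp) -EFinD lee_fin /fr; lra.
  have cC : convset C.
    move=> u v t t01 Cu Cv; have [Du hu] := Cfin _ Cu; have [Dv hv] := Cfin _ Cv.
    have [Dc fc] := cDf t u v t01 Du Dv.
    rewrite /C /= -(fineK Dc) -EFinD lee_fin (linfD _ _ (L1 q)) !(linfZ _ _ (L1 q)).
    move: fc hu hv; rewrite /fr => fc hu hv.
    by case/andP: t01 => t0 t1; nra.
  have [c0 Cc0] := filter_ex GC.
  have [Kq hKq] := LK q.
  pose g := fr q + e - L pb q.
  have [be [gb hbe]] : exists be, g < be /\ (be%:E < phi pb)%E.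
    have nn := nNy pb; move: hlt; rewrite /g; case E: (phi pb) nn => [v| |] //= _ h.
    - exists ((fr q + e - L pb q + v) / 2); rewrite lte_fin.
      move: h; rewrite lte_fin => h; split; lra.
    - by exists (fr q + e - L pb q + 1); split; [lra|rewrite ltey].
  have [V nV hV] := lsc pb be hbe.
  have /nbhs_normP [eps /= eps0 heps] := nV.
  have K1 : 0 < `|Kq| + 1 by rewrite ltr_pwDr.
  pose rho := Num.min eps ((be - g) / (`|Kq| + 1)).
  have rho0 : 0 < rho by rewrite lt_min eps0 divr_gt0 // subr_gt0.
  have far : forall c, C c -> rho <= `|c - pb|.
    move=> c Cc; rewrite leNgt; apply/negP => hc.
    have [Dc hc2] := Cfin _ Cc.
    have Vc : V c.
      apply: heps; rewrite /= distrC; apply: lt_le_trans hc _; by rewrite ge_min lexx.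
    have := hV _ Vc; rewrite -(fineK Dc) lte_fin -/(fr c) => hbc.
    have hL : `|L c q - L pb q| <= `|Kq| * `|c - pb|.
      rewrite -(linfB _ _ (L1 q)); apply: le_trans (hKq _) _.
      by rewrite ler_wpM2r // ler_norm.
    have hr2 : rho <= (be - g) / (`|Kq| + 1) by rewrite ge_min lexx orbT.
    have : (`|Kq| + 1) * `|c - pb| < be - g.
      rewrite -ltr_pdivlMl //; rewrite mulrC; apply: lt_le_trans hr2.
      by [].
    move: hL; rewrite ler_norml => /andP[hL1 hL2].
    have := normr_ge0 (c - pb); rewrite /g; nra.
  have [l [ll [K hK] [d d0 hd]]] := sep_closed rho0 cC Cc0 far.
  pose f1 (x : X) := l (x, 0).
  pose f2 (y : Y) := l (0, y).
  have n1 : forall x : X, `|((x, 0) : X * Y)| = `|x|.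
    by move=> x; rewrite prod_normE /= normr0; apply/max_idPl.
  have n2 : forall y : Y, `|((0, y) : X * Y)| = `|y|.
    by move=> y; rewrite prod_normE /= normr0; apply/max_idPr.
  have lf1 : linf f1.
    move=> c u v; rewrite /f1 -(linfZ _ _ ll) -(linfD _ _ ll); congr l.
    by change ((c *: u + v, 0) = (c *: u + v, c *: (0 : Y) + 0)); rewrite scaler0 addr0.
  have lf2 : linf f2.
    move=> c u v; rewrite /f2 -(linfZ _ _ ll) -(linfD _ _ ll); congr l.
    by change ((0, c *: u + v) = (c *: (0 : X) + 0, c *: u + v)); rewrite scaler0 addr0.
  have df1 : is_dual f1.
    split => //; apply: (lip_continuous (K := K)) => // x; rewrite /f1 -n1; exact: hK.
  have df2 : is_dual f2.
    split => //; apply: (lip_continuous (K := K)) => // y; rewrite /f2 -n2; exact: hK.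
  have lsplit : forall p : X * Y, l p = f1 p.1 + f2 p.2.
    case=> x y; rewrite /f1 /f2 -(linfD _ _ ll) /=; congr l.
    by change ((x, y) = (x + 0, 0 + y)); rewrite addr0 add0r.
  have d20 : 0 < d / 2 by rewrite divr_gt0.
  have [p [[h1 h2] Cp]] := filter_ex (filterI (filterI (hxb _ df1 _ d20) (hyb _ df2 _ d20)) GC).
  move: h1 h2 => /= h1 h2.
  have := hd _ Cp; rewrite !lsplit /=.
  move: h1 h2; rewrite !ltr_norml => /andP[h1 _] /andP[h2 _]; lra.
have Dpb : Dom pb.
  have := key 0 D0 1 ltr01; rewrite (linf0 (L2 pb)) adde0 => h.
  by have [] := fin_le (nNy pb) h.
exists pb; split => // q.
have [Dq|nDq] := boolP (phi q \is a fin_num).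
  rewrite -(fineK Dpb) -(fineK Dq) -EFinD lee_fin; apply/ler_addgt0Pr => e e0.
  by have := key q Dq e e0; rewrite -(fineK Dpb) -EFinD lee_fin.
have -> : phi q = +oo%E.
  move: nDq (nNy q); rewrite fin_numE negb_and !negbK => /orP[/eqP -> //|/eqP -> //].
by rewrite leey.
Qed.
Lemma bnd_aux (R : realType) (k u w0 n : R) : 0 <= u -> 0 <= w0 -> w0 <= n ->
  k * u * w0 <= `|k| * u * n.
Proof.
move=> u0 hw wn; have k1 := ler_norm k; have k0 := normr_ge0 k.
apply: (@le_trans _ _ (`|k| * u * w0)); first by rewrite ler_wpM2r // ler_wpM2r.
by rewrite ler_wpM2l // mulr_ge0.
Qed.

Unset Implicit Arguments.

Theorem proposition4p2 (R : realType) (X Y : completeNormedModType R)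
  (phi : X * Y -> \bar R) (a : X -> Y -> R) (b1 : X -> X -> R) (b2 : Y -> Y -> R) :
  reflexive_space X -> reflexive_space Y ->
  (forall p, phi p != -oo%E) ->
  convex_XY phi ->
  lower_semicontinuous phi ->
  phi (0, 0) \is a fin_num ->
  (forall M : R, exists r : R, forall x y,
      r < `|x| + `|y| -> ((M * (`|x| + `|y|))%:E <= phi (x, y))%E) ->
  bounded_bilinear a -> skew_adjoint b1 -> skew_adjoint b2 ->
  let I := fun p : X * Y =>
    (phi p + conjugate phi (fun x' => (- a x' p.2 + b1 p.1 x')%R)
                           (fun y' => (a p.1 y' + b2 p.2 y')%R))%E in
  ereal_inf [set I p | p in [set: X * Y]] = 0%E /\
  exists pb : X * Y, I pb = 0%E /\
    in_subdiff phi pb (fun x' => - a x' pb.2 + b1 pb.1 x')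
                      (fun y' => a pb.1 y' + b2 pb.2 y').
Proof.
move=> rX rY nNy cvx lsc phi0 coer [ha1 [ha2 [Ka hKa]]]
  [[hb1l [hb1r [K1 hK1]]] sk1] [[hb2l [hb2r [K2 hK2]]] sk2] I.
pose L (p q : X * Y) : R := (- a q.1 p.2 + b1 p.1 q.1) + (a p.1 q.2 + b2 p.2 q.2).
have p1 : forall (c : R) (u v : X * Y), (c *: u + v).1 = c *: u.1 + v.1 by [].
have p2 : forall (c : R) (u v : X * Y), (c *: u + v).2 = c *: u.2 + v.2 by [].
have L1 : forall q, linf (fun p => L p q).
  by move=> q c u v; rewrite /L p1 p2 ha2 hb1l ha1 hb2l; ring.
have L2 : forall p, linf (L p).
  by move=> p c u v; rewrite /L p1 p2 ha1 hb1r ha2 hb2r; ring.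
have L0 : forall p, L p p = 0.
  by move=> p; rewrite /L; have := sk1 p.1 p.1; have := sk2 p.2 p.2; lra.
have LK : forall q, exists K : R, forall p, `|L p q| <= K * `|p|.
  move=> q; exists (`|Ka| * `|q.1| + `|K1| * `|q.1| + `|Ka| * `|q.2| + `|K2| * `|q.2|).
  move=> p.
  have n1 : `|p.1| <= `|p| by rewrite prod_normE le_max lexx.
  have n2 : `|p.2| <= `|p| by rewrite prod_normE le_max lexx orbT.
  have e1 := le_trans (hKa q.1 p.2) (bnd_aux Ka (normr_ge0 q.1) (normr_ge0 p.2) n2).
  have e2 := hK1 p.1 q.1.
  have e2' : K1 * `|p.1| * `|q.1| <= `|K1| * `|q.1| * `|p|.
    rewrite -mulrA [`|p.1| * _]mulrC mulrA; exact: bnd_aux.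
  have e3 : `|a p.1 q.2| <= `|Ka| * `|q.2| * `|p|.
    apply: le_trans (hKa _ _) _; rewrite -mulrA [`|p.1| * _]mulrC mulrA; exact: bnd_aux.
  have e4 : `|b2 p.2 q.2| <= `|K2| * `|q.2| * `|p|.
    apply: le_trans (hK2 _ _) _; rewrite -mulrA [`|p.2| * _]mulrC mulrA; exact: bnd_aux.
  rewrite /L; apply: le_trans (ler_normD _ _) _.
  have t1 := ler_normD (- a q.1 p.2) (b1 p.1 q.1).
  have t2 := ler_normD (a p.1 q.2) (b2 p.2 q.2).
  rewrite normrN in t1.
  have : `|a q.1 p.2| <= `|Ka| * `|q.1| * `|p| by [].
  have := le_trans e2 e2'.
  rewrite !mulrDl; lra.
have phi0' : phi 0 \is a fin_num by [].
have [pb [Dpb hpb]] := core rX rY nNy cvx lsc phi0' coer L1 L2 L0 LK.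
pose cj (p : X * Y) := conjugate phi (fun x' => (- a x' p.2 + b1 p.1 x')%R)
                           (fun y' => (a p.1 y' + b2 p.2 y')%R).
have cjge : forall p q, ((L p q)%:E - phi q <= cj p)%E.
  by move=> p q; apply: ereal_sup_ubound; exists q.
have Ige : forall p, (0 <= I p)%E.
  move=> p; rewrite /I -/(cj p).
  have c1 := cjge p p; rewrite L0 in c1.
  have c2 := cjge p 0; rewrite -(fineK phi0') -EFinB in c2.
  have nn := nNy p.
  case E: (phi p) nn c1 => [v| |] //= _ c1.
    case E2: (cj p) c1 => [w| |] //=; first by rewrite !lee_fin; lra.
    by rewrite addey // leey.
  by case E2: (cj p) c2 => [w| |] //= _; rewrite addye ?leey.
have Ipb : I pb = 0%E.
  rewrite /I -/(cj pb).
  have -> : cj pb = (- fine (phi pb))%:E.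
    apply/eqP; rewrite eq_le; apply/andP; split.
      apply: ge_ereal_sup => _ [q _ <-].
      have := hpb q; have nn := nNy q.
      change ((fun x' => - a x' pb.2 + b1 pb.1 x') q.1 + (fun y' => a pb.1 y' + b2 pb.2 y') q.2)
        with (L pb q).
      rewrite -(fineK Dpb).
      case E: (phi q) nn => [vq| |] //= _; rewrite ?lee_fin; [rewrite /L; lra|by move=> _; rewrite addeNy leNye].
    have := cjge pb pb; rewrite L0 -(fineK Dpb) -EFinB sub0r.
    by [].
  by rewrite -(fineK Dpb) -EFinD subrr.
split.
  apply/eqP; rewrite eq_le; apply/andP; split.
    by apply: ge_ereal_inf; exists (I pb); [exists pb|rewrite Ipb].
  by apply: le_ereal_inf_tmp => _ [p _ <-]; exact: Ige.
exists pb; split => //; split => // q.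
change (phi pb + (L pb (q - pb))%:E <= phi q)%E.
by rewrite (linfB _ _ (L2 pb)) L0 subr0.
Qed.
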